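(* Let $(X,Y)\sim H$ with marginal distribution functions $F$ (of $X$) and $G$ (of $Y$). Then $(X,Y)$ is quasi-independent if and only if $$\mathbb P(X\in A,Y\in B)+\mathbb P(X\in B,Y\in A)=\mathbb P(X\in A)\mathbb P(Y\in B)+\mathbb P(X\in B)\mathbb P(Y\in A)$$ for all Borel sets $A,B\subseteq\mathbb R$.
   Context: $(X,Y)$ is quasi-independent if $\frac{H(x,y)+H(y,x)}{2}=\frac12F(x)G(y)+\frac12F(y)G(x)$ for all $x,y\in\mathbb R$, where $H$ is the joint distribution function. *)

(* Defs.v *)
From HB Require Import structures.
From mathcomp Require Import all_boot all_order all_algebra.
From mathcomp Require Import all_classical all_reals all_analysis.
Set Implicit Arguments. Unset Strict Implicit. Unset Printing Implicit Defensive.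
Import Order.TTheory GRing.Theory Num.Theory.
Local Open Scope classical_set_scope.
Local Open Scope ring_scope.

Definition joint_cdf (d : measure_display) (T : measurableType d) (R : realType)
  (P : probability T R) (X Y : T -> R) (x y : R) : R :=
  fine (P (X @^-1` `]-oo, x] `&` Y @^-1` `]-oo, y])).

Definition marg_cdf (d : measure_display) (T : measurableType d) (R : realType)
  (P : probability T R) (X : T -> R) (x : R) : R :=
  fine (P (X @^-1` `]-oo, x])).

Definition quasi_independent (d : measure_display) (T : measurableType d)
  (R : realType) (P : probability T R) (X Y : T -> R) : Prop :=
  forall x y : R,
    (joint_cdf P X Y x y + joint_cdf P X Y y x) / 2
    = 2^-1 * marg_cdf P X x * marg_cdf P Y y
      + 2^-1 * marg_cdf P X y * marg_cdf P Y x.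

(* Main.v *)
Require Import Defs.
From HB Require Import structures.
From mathcomp Require Import all_boot all_order all_algebra.
From mathcomp Require Import all_classical all_reals all_analysis.
From mathcomp Require Import lra.
Import Order.TTheory GRing.Theory Num.Theory.
Local Open Scope classical_set_scope.
Local Open Scope ring_scope.

Definition Ghl (R : realType) : set (set R) :=
  [set A | exists x : R, A = `]-oo, x]%classic].

Lemma Ghl_sigma (R : realType) : @measurable _ R = <<s Ghl R >>.
Proof.
rewrite eqEsubset; split.
- apply: smallest_sub; first exact: smallest_sigma_algebra.
  move=> A hA; rewrite /measurable /= in hA. case: hA => -[a b] _ <- /=.
  have -> : `]a, b]%classic = `]-oo, b]%classic `&` ~` `]-oo, a]%classic.
    rewrite setCitvl; apply/seteqP; split => z /=; rewrite !in_itv /=.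
      move=> /andP[h1 h2]; split => //; apply/andP; split => //.
    by move=> [h1 /andP[h2 _]]; rewrite h1 h2.
  have h1 : <<s Ghl R>> `]-oo, b]%classic.
    by apply: sub_sigma_algebra; exists b.
  have h2 : <<s Ghl R>> `]-oo, a]%classic.
    by apply: sub_sigma_algebra; exists a.
  have [s0 sC sU] := smallest_sigma_algebra setT (Ghl R).
  have hC U : <<s Ghl R>> U -> <<s Ghl R>> (~` U).
    by move=> hU; rewrite -setTD; exact: sC.
  have hU2 U V : <<s Ghl R>> U -> <<s Ghl R>> V -> <<s Ghl R>> (U `|` V).
    move=> hU hV; rewrite -bigcup2E; apply: sU => -[|[|k]] //=.
  rewrite -[X in <<s Ghl R>> X]setCK setCI; apply: (hC); apply: hU2; first exact: hC.
  by rewrite setCK.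
- apply: smallest_sub; first exact: smallest_sigma_algebra.
  by move=> _ [x ->]; exact: measurable_itv.
Qed.

Definition EqP {d} {T : measurableType d} {R : realType} (P : probability T R)
  (X Y : T -> R) (A B : set R) : Prop :=
  (P (X @^-1` A `&` Y @^-1` B) + P (X @^-1` B `&` Y @^-1` A)
   = P (X @^-1` A) * P (Y @^-1` B) + P (X @^-1` B) * P (Y @^-1` A))%E.

Lemma EqP_sym d (T : measurableType d) (R : realType) (P : probability T R)
  (X Y : T -> R) A B : EqP P X Y A B -> EqP P X Y B A.
Proof. by rewrite /EqP addeC => ->; rewrite addeC. Qed.

Lemma Ghl_setI (R : realType) : setI_closed (Ghl R).
Proof.
move=> _ _ [x ->] [y ->]; exists (Order.min x y).
apply/seteqP; split => z /=; rewrite !in_itv /= le_min.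
  by move=> [-> ->].
by move=> /andP[-> ->].
Qed.

Lemma algC_step (R : realType) (a1 a2 c1 c2 xS xS' yS yS' xB yB : \bar R) :
  a1 \is a fin_num -> a2 \is a fin_num -> c1 \is a fin_num -> c2 \is a fin_num ->
  xS \is a fin_num -> xS' \is a fin_num -> yS \is a fin_num -> yS' \is a fin_num ->
  xB \is a fin_num -> yB \is a fin_num ->
  yB = (a1 + c1)%E -> xB = (a2 + c2)%E -> (xS + xS' = 1)%E -> (yS + yS' = 1)%E ->
  (a1 + a2 = xS * yB + xB * yS)%E -> (c1 + c2 = xS' * yB + xB * yS')%E.
Proof.
move=> f1 f2 f3 f4 f5 f6 f7 f8 f9 f10.
rewrite -(fineK f1) -(fineK f2) -(fineK f3) -(fineK f4) -(fineK f5) -(fineK f6)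
  -(fineK f7) -(fineK f8) -(fineK f9) -(fineK f10).
rewrite -!EFinD.
move=> [e1] [e2] [e3] [e4] [e5].
apply/congr1.
have -> : fine xS' = 1 - fine xS by lra.
have -> : fine yS' = 1 - fine yS by lra.
rewrite e1 e2 in e5 *. nra.
Qed.

Lemma stepB d (T : measurableType d) (R : realType) (P : probability T R)
  (X Y : T -> R) (mX : measurable_fun setT X) (mY : measurable_fun setT Y)
  (B : set R) (mB : measurable B) :
  (forall x, EqP P X Y `]-oo, x]%classic B) ->
  forall A, measurable A -> EqP P X Y A B.
Proof.
move=> h A mA.
have mpX S : measurable S -> measurable (X @^-1` S).
  by move=> mS; rewrite -[X @^-1` S]setTI; exact: mX.
have mpY S : measurable S -> measurable (Y @^-1` S).
  by move=> mS; rewrite -[Y @^-1` S]setTI; exact: mY.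
have fin C : measurable C -> P C \is a fin_num.
  by move=> mC; exact: fin_num_measure.
have mXB := mpX _ mB; have mYB := mpY _ mB.
apply: (@dynkin_induction _ R (Ghl R) (fun A => EqP P X Y A B)
  (Ghl_sigma R) (@Ghl_setI R)); last by rewrite -Ghl_sigma.
- by rewrite /EqP !preimage_setT setTI setIT probability_setT mul1e mule1.
- by move=> _ [x ->]; exact: h.
- move=> S mS hS; rewrite /EqP -!preimage_setC.
  have mXS := mpX _ mS; have mYS := mpY _ mS.
  move: hS; apply: algC_step;
    try (apply: fin; by [apply: measurableI|apply: measurableC|]).
  1,2: by apply: fin; apply: measurableI => //; exact: measurableC.
  + rewrite (measureDI P mYB mXS) addeC setDE.
    by congr (_ + _)%E; rewrite setIC.
  + by rewrite (measureDI P mXB mYS) addeC setDE.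
  + by rewrite (probability_setC P mXS) addeC subeK // fin.
  + by rewrite (probability_setC P mYS) addeC subeK // fin.
- move=> F mF tF hF; rewrite /EqP !preimage_bigcup setI_bigcupl setI_bigcupr.
  have tr (Z : T -> R) : trivIset setT (fun k => Z @^-1` F k).
    apply/trivIsetP => i j _ _ ij.
    by rewrite -preimage_setI ((trivIsetP.1 tF) i j I I ij) preimage_set0.
  rewrite (measure_bigcup P setT (fun k => X @^-1` F k `&` Y @^-1` B)); last first.
    exact: trivIset_setIr.
    by move=> k _; apply: measurableI => //; exact: mpX.
  rewrite (measure_bigcup P setT (fun k => X @^-1` B `&` Y @^-1` F k)); last first.
    exact: trivIset_setIl.
    by move=> k _; apply: measurableI => //; exact: mpY.
  rewrite (measure_bigcup P setT (fun k => X @^-1` F k)) //; last first.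
    by move=> k _; exact: mpX.
  rewrite (measure_bigcup P setT (fun k => Y @^-1` F k)) //; last first.
    by move=> k _; exact: mpY.
  rewrite -(fineK (fin _ mYB)) -(fineK (fin _ mXB)).
  rewrite muleC -!nneseriesZl; last 2 first.
    move=> i _. have := measure_ge0 P (Y @^-1` F i). move=> hh. exact: hh.
    by move=> *; by [].
  rewrite -!nneseriesD; last 4 first.
    by move=> *; apply: mule_ge0 => //; rewrite fineK ?fin.
    by move=> *; apply: mule_ge0 => //; rewrite fineK ?fin.
    by move=> *; by [].
    by move=> *; by [].
  apply: eq_eseriesr => i _.
  by rewrite !fineK ?fin // hF muleC.
Qed.

Theorem lemma1 (d : measure_display) (T : measurableType d) (R : realType)
  (P : probability T R) (X Y : T -> R)
  (mX : measurable_fun setT X) (mY : measurable_fun setT Y) :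
  quasi_independent P X Y <->
  (forall A B : set R, measurable A -> measurable B ->
     (P (X @^-1` A `&` Y @^-1` B) + P (X @^-1` B `&` Y @^-1` A))%E
     = (P (X @^-1` A) * P (Y @^-1` B) + P (X @^-1` B) * P (Y @^-1` A))%E).
Proof.
have mpX S : measurable S -> measurable (X @^-1` S).
  by move=> mS; rewrite -[X @^-1` S]setTI; exact: mX.
have mpY S : measurable S -> measurable (Y @^-1` S).
  by move=> mS; rewrite -[Y @^-1` S]setTI; exact: mY.
have fin C : measurable C -> P C \is a fin_num.
  by move=> mC; exact: fin_num_measure.
have mI (x : R) : measurable (`]-oo, x]%classic : set R) by exact: measurable_itv.
split.
- move=> qi.
  have h0 x y : EqP P X Y `]-oo, x]%classic `]-oo, y]%classic.
    have := qi x y; rewrite /joint_cdf /marg_cdf /EqP => e.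
    rewrite -(fineK (fin _ (measurableI _ _ (mpX _ (mI x)) (mpY _ (mI y))))).
    rewrite -(fineK (fin _ (measurableI _ _ (mpX _ (mI y)) (mpY _ (mI x))))).
    rewrite -(fineK (fin _ (mpX _ (mI x)))) -(fineK (fin _ (mpX _ (mI y)))).
    rewrite -(fineK (fin _ (mpY _ (mI x)))) -(fineK (fin _ (mpY _ (mI y)))).
    rewrite -!EFinM -!EFinD; congr (_%:E).
    lra.
  have h1 y A : measurable A -> EqP P X Y A `]-oo, y]%classic.
    by move=> mA; apply: stepB => // x; exact: h0.
  move=> A B mA mB.
  apply: EqP_sym; apply: stepB => // x.
  by apply: EqP_sym; exact: h1.
- move=> H x y; have := H _ _ (mI x) (mI y).
  rewrite /joint_cdf /marg_cdf.
  rewrite -(fineK (fin _ (measurableI _ _ (mpX _ (mI x)) (mpY _ (mI y))))).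
  rewrite -(fineK (fin _ (measurableI _ _ (mpX _ (mI y)) (mpY _ (mI x))))).
  rewrite -(fineK (fin _ (mpX _ (mI x)))) -(fineK (fin _ (mpX _ (mI y)))).
  rewrite -(fineK (fin _ (mpY _ (mI x)))) -(fineK (fin _ (mpY _ (mI y)))).
  rewrite -!EFinM -!EFinD => -[e].
  rewrite /=.
  lra.
Qed.
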